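(* Let $C\subseteq\mathbb{F}_2^n$ be a code. Then: (1) $|C|\le 2^{\,n-\lceil 2\delta(C)/(\gamma+1)\rceil+1}$; (2) $|C|\le \dfrac{2^n}{\sum_{i=0}^t\binom ni}$, where $t$ is the largest integer with $t<\delta(C)/(\gamma+1)$; (3) if $d:=\lceil 2\delta(C)/(\gamma+1)\rceil$ satisfies $2d>n$, then $|C|\le\left\lfloor\frac{2d}{2d-n}\right\rfloor$.
   Context: Let $n\ge2$ and fix reals $0<p\le q<1/2$. Let $\gamma:=\log_{q/(1-p)}\left(\frac{p}{1-q}\right)$. For $a,b\in\{0,1\}$, $d_{ab}(y,x)=|\{i: y_i=a,\ x_i=b\}|$; discrepancy $\delta(y,x):=\gamma\,d_{10}(y,x)+d_{01}(y,x)$. A code is $C\subseteq\mathbb{F}_2^n$ with $|C|\ge2$, and $\delta(C)=\min\{\delta(x,x'):x,x'\in C,\ x\ne x'\}$. *)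

(* Defs.v *)
From HB Require Import structures.
From mathcomp Require Import all_boot all_order all_algebra.
From mathcomp Require Import all_classical all_reals all_analysis.
Set Implicit Arguments. Unset Strict Implicit. Unset Printing Implicit Defensive.
Import Order.TTheory GRing.Theory Num.Theory.
Local Open Scope ring_scope.

Notation word n := {ffun 'I_n -> bool}.

(* gamma = log_{q/(1-p)} (p/(1-q)) = ln (p/(1-q)) / ln (q/(1-p)) *)
Definition gammaZ (R : realType) (p q : R) : R :=
  ln (p / (1 - q)) / ln (q / (1 - p)).

Definition dab (n : nat) (a b : bool) (y x : word n) : nat :=
  #|[set i : 'I_n | (y i == a) && (x i == b)]|.

Definition disc (R : realType) (g : R) (n : nat) (y x : word n) : R :=
  g * (dab true false y x)%:R + (dab false true y x)%:R.

Definition is_min_disc (R : realType) (g : R) (n : nat) (C : {set word n}) (d : R) : Prop :=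
  (exists x y, [/\ x \in C, y \in C, x != y & disc g x y = d]) /\
  (forall x y, x \in C -> y \in C -> x != y -> d <= disc g x y).

(* Main.v *)
Require Import Defs.
From HB Require Import structures.
From mathcomp Require Import all_boot all_order all_algebra.
From mathcomp Require Import all_classical all_reals all_analysis.
From mathcomp Require Import ring lra zify.
Import Order.TTheory GRing.Theory Num.Theory.
Local Open Scope ring_scope.
Set Implicit Arguments. Unset Strict Implicit. Unset Printing Implicit Defensive.

Definition dH (n : nat) (x y : word n) : nat := #|[set i | x i != y i]|.

Lemma card_set_sum (n : nat) (P : pred 'I_n) : #|[set i | P i]| = (\sum_i (P i : nat))%N.
Proof.
rewrite -sum1_card big_mkcond /=; apply: eq_bigr => i _; rewrite inE; by case: (P i).
Qed.

Lemma dH_sum n (x y : word n) : dH x y = (\sum_i (x i != y i : nat))%N.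
Proof. exact: card_set_sum. Qed.

Lemma dab_swap n a b (x y : word n) : dab a b y x = dab b a x y.
Proof. by rewrite /dab; apply: eq_card => i; rewrite !inE andbC. Qed.

Lemma dH_dab n (x y : word n) : dH x y = (dab true false x y + dab false true x y)%N.
Proof.
rewrite /dH /dab !card_set_sum -big_split /=; apply: eq_bigr => i _.
by case: (x i); case: (y i).
Qed.

Lemma dH_le n (x y : word n) : (dH x y <= n)%N.
Proof. by rewrite /dH; apply: leq_trans (max_card _) _; rewrite card_ord. Qed.

Lemma dH_pos n (x y : word n) : x != y -> (0 < dH x y)%N.
Proof.
move=> nxy; rewrite /dH card_gt0; apply/set0Pn.
have [i Hi] : exists i, x i != y i.
  apply/existsP; apply: contraR nxy; rewrite negb_exists => /forallP H.
  by apply/eqP/ffunP => i; move: (H i); rewrite negbK => /eqP.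
by exists i; rewrite inE.
Qed.

Lemma disc_sym (R : realType) (g : R) n (x y : word n) :
  disc g x y + disc g y x = (g + 1) * (dH x y)%:R.
Proof.
rewrite /disc (dab_swap true false x y) (dab_swap false true x y) dH_dab natrD.
lra.
Qed.

Lemma disc_pos (R : realType) (g : R) n (x y : word n) : 0 < g -> x != y -> 0 < disc g x y.
Proof.
move=> g0 nxy; have := dH_pos nxy; rewrite dH_dab /disc.
case: (dab true false x y) => [|k] /=.
  rewrite add0n mulr0 add0r => h; by rewrite ltr0n.
move=> _; apply: ltr_wpDr => //; apply: mulr_gt0 => //; by rewrite ltr0n.
Qed.

Local Close Scope ring_scope.

Lemma singleton_nat n (C : {set word n}) e : (1 <= e <= n)%N ->
  (forall x y, x \in C -> y \in C -> x != y -> e <= dH x y)%N ->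
  (#|C| <= 2 ^ (n - e + 1))%N.
Proof.
move=> /andP[e1 en] HC.
set k := (n - e + 1)%N.
have lekn : (k <= n)%N by rewrite /k; lia.
pose S := [set widen_ord lekn i | i in 'I_k].
have cS : #|S| = k by rewrite card_imset ?card_ord //; by move=> i j /(congr1 val) /= /val_inj.
have cSC : #|~: S| = (n - k)%N by have := cardsC S; rewrite card_ord cS; lia.
pose f (x : word n) := [set i in S | x i].
have finj : {in C &, injective f}.
  move=> x y xC yC fxy; apply/eqP; apply/negPn/negP => nxy.
  have := HC x y xC yC nxy.
  have : (dH x y <= #|~: S|)%N.
    rewrite /dH; apply: subset_leq_card. apply/fintype.subsetP => i; rewrite !inE => xyi.
    apply/negP => iS; move/setP: fxy => /(_ i); rewrite !inE iS /=.
    by move/eqP: xyi.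
  rewrite cSC /k; lia.
rewrite -(card_in_imset finj) -cS -card_powerset; apply: subset_leq_card.
apply/fintype.subsetP => _ /imsetP[x _ ->]; rewrite powersetE; apply/fintype.subsetP => i.
by rewrite inE => /andP[].
Qed.

Lemma ball_card n t :
  #|[set A : {set 'I_n} | (#|A| <= t)%N]| = (\sum_(0 <= i < n.+1 | (i <= t)%N) 'C(n, i))%N.
Proof.
rewrite -sum1_card big_mkord.
rewrite (partition_big (fun A : {set 'I_n} => (inord #|A| : 'I_n.+1)) (fun j : 'I_n.+1 => (j <= t)%N)).
  apply: eq_bigr => j jt.
  transitivity 'C(#|'I_n|, j); last by rewrite card_ord.
  rewrite -card_draws -sum1_card; apply: eq_bigl => A.
  rewrite !inE.
  have An : (#|A| <= n)%N by rewrite -[X in (_ <= X)%N](card_ord n) max_card.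
  apply/idP/idP.
    move=> /andP[_ /eqP <-]; rewrite inordK //.
  move=> /eqP Aj; rewrite Aj jt /=; apply/eqP/val_inj; rewrite /= inordK //; lia.
move=> A; rewrite inE => At.
have An : (#|A| <= n)%N by rewrite -[X in (_ <= X)%N](card_ord n) max_card.
rewrite inordK //; lia.
Qed.

Definition xorw n (x : word n) (A : {set 'I_n}) : word n := [ffun i => x i (+) (i \in A)].

Lemma hamming_nat n (C : {set word n}) t :
  (forall x y, x \in C -> y \in C -> x != y -> 2 * t < dH x y)%N ->
  (#|C| * #|[set A : {set 'I_n} | (#|A| <= t)%N]| <= 2 ^ n)%N.
Proof.
move=> HC; set St := [set A : {set 'I_n} | _].
pose F (p : word n * {set 'I_n}) := xorw p.1 p.2.
have Finj : {in finset.setX C St &, injective F}.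
  move=> [x A] [y B]; rewrite !inE /= => /andP[xC At] /andP[yC Bt] /ffunP Fxy.
  have xy : x = y.
    apply/eqP; apply/negPn/negP => nxy.
    have := HC x y xC yC nxy.
    have : (dH x y <= #|A :|: B|)%N.
      rewrite /dH; apply: subset_leq_card; apply/fintype.subsetP => i; rewrite !inE => xyi.
      move: (Fxy i); rewrite /F /xorw !ffunE.
      by case: (i \in A); case: (i \in B) => //=; rewrite !addbF => /eqP; rewrite (negbTE xyi).
    move=> dHle; rewrite ltnNge => /negP; apply; apply: leq_trans dHle _.
    apply: leq_trans (leq_card_setU A B) _; rewrite mul2n -addnn; exact: leq_add.
  subst y; congr (_, _); apply/setP => i; move: (Fxy i); rewrite /F /xorw !ffunE.
  by case: (x i); case: (i \in A); case: (i \in B).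
rewrite -cardsX -(card_in_imset Finj).
apply: leq_trans (max_card _) _.
by rewrite card_ffun card_bool card_ord.
Qed.

Lemma coord_bound n (C : {set word n}) i :
  (2 * (\sum_(x in C) \sum_(y in C) (x i != y i : nat)) <= #|C| * #|C|)%N.
Proof.
set a := (\sum_(y in C) (y i : nat))%N.
set b := (\sum_(y in C) (~~ y i : nat))%N.
have ab : (a + b)%N = #|C|.
  rewrite /a /b -big_split /= -sum1_card; apply: eq_bigr => y _; by case: (y i).
have inner : forall x : word n, (\sum_(y in C) (x i != y i : nat))%N = (x i * b + (~~ x i) * a)%N.
  move=> x; rewrite /a /b !big_distrr -big_split /=; apply: eq_bigr => y _.
  by case: (x i); case: (y i).
rewrite (eq_bigr _ (fun x _ => inner x)) big_split /= -!big_distrl /= -/a -/b -ab.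
clear inner ab; clearbody a b.
case: (leqP a b) => [/subnKC <-|/ltnW/subnKC <-]; set k := (_ - _)%N; clearbody k; nia.
Qed.

Lemma plotkin_nat n (C : {set word n}) dn :
  (forall x y, x \in C -> y \in C -> x != y -> dn <= dH x y)%N ->
  (2 * (#|C| * #|C| * dn) <= 2 * (#|C| * dn) + n * (#|C| * #|C|))%N.
Proof.
move=> HC.
set S := (\sum_(x in C) \sum_(y in C) dH x y)%N.
have low : (#|C| * #|C| * dn <= #|C| * dn + S)%N.
  have H1 : forall x, x \in C -> (#|C| * dn <= dn + \sum_(y in C) dH x y)%N.
    move=> x xC; rewrite -sum_nat_const (bigD1 x xC) [X in (_ <= _ + X)%N](bigD1 x xC) /=.
    apply: leq_add => //; apply: (leq_trans _ (leq_addl _ _)); apply: leq_sum => y /andP[yC yx].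
    by apply: HC; rewrite // eq_sym.
  rewrite -mulnA -sum_nat_const (@leq_trans (\sum_(x in C) (dn + \sum_(y in C) dH x y))) //.
    by apply: leq_sum.
  by rewrite big_split /= sum_nat_const.
have up : (2 * S <= n * (#|C| * #|C|))%N.
  have -> : S = (\sum_i \sum_(x in C) \sum_(y in C) (x i != y i : nat))%N.
    rewrite /S [RHS]exchange_big; apply: eq_bigr => x _.
    rewrite exchange_big; apply: eq_bigr => y _; exact: dH_sum.
  rewrite big_distrr /=; rewrite -[X in (_ <= X * _)%N](card_ord n) -sum_nat_const.
  by apply: leq_sum => i _; apply: coord_bound.
lia.
Qed.

Local Open Scope ring_scope.

Lemma gamma_pos (R : realType) (p q : R) : 0 < p -> p <= q -> q < 1 / 2 -> 0 < gammaZ p q.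
Proof.
move=> hp hpq hq; rewrite /gammaZ -divrNN; apply: divr_gt0; rewrite oppr_gt0; apply: ln_lt0;
  apply/andP; split.
- apply: divr_gt0 => //; lra.
- rewrite ltr_pdivrMr; lra.
- apply: divr_gt0; lra.
- rewrite ltr_pdivrMr; lra.
Qed.

Lemma natintR (R : realType) (k : nat) : (k%:Z)%:~R = k%:R :> R.
Proof. by []. Qed.

Unset Implicit Arguments.
Theorem mainTheorem12 (R : realType) (n : nat) (p q : R)
  (hn : (2 <= n)%N) (hp : 0 < p) (hpq : p <= q) (hq : q < 1 / 2)
  (C : {set word n}) (hC : (2 <= #|C|)%N) (dC : R)
  (hdC : is_min_disc (gammaZ p q) C dC) :
  let g := gammaZ p q in
  [/\ (#|C|%:R <= (2 : R) ^ (n%:Z - Num.ceil (2 * dC / (g + 1)) + 1)),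
      (forall t : int, t%:~R < dC / (g + 1) ->
         (forall t' : int, t'%:~R < dC / (g + 1) -> t' <= t) ->
         #|C|%:R <= (2 : R) ^+ n / \sum_(0 <= i < n.+1 | (i%:Z <= t)) ('C(n, i))%:R)
    & (let d := Num.ceil (2 * dC / (g + 1)) in
       n%:Z < 2 * d -> #|C|%:Z <= Num.floor ((2 * d)%:~R / (2 * d - n%:Z)%:~R : R))].
Proof.
move=> g.
have g0 : 0 < g := gamma_pos hp hpq hq.
have g1 : 0 < g + 1 by lra.
case: hdC => [[x0 [y0 [x0C y0C nx0y0 dCeq]]] Hmin].
have dC0 : 0 < dC by rewrite -dCeq; exact: disc_pos.
set r := 2 * dC / (g + 1).
have r0 : 0 < r by rewrite /r; apply: divr_gt0 => //; lra.
have key : forall x y, x \in C -> y \in C -> x != y -> r <= (dH x y)%:R.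
  move=> x y xC yC nxy; rewrite /r ler_pdivrMr // [X in _ <= X]mulrC -disc_sym.
  have := Hmin x y xC yC nxy; have := Hmin y x yC xC; rewrite eq_sym => /(_ nxy).
  lra.
have [e de] : exists e : nat, Num.ceil r = e%:Z.
  exists `|Num.ceil r|%N; rewrite gez0_abs //; apply: ltW; by rewrite ceil_gt0.
have e1 : (1 <= e)%N by rewrite -lez_nat -de -gtz0_ge1 ceil_gt0.
have keye : forall x y, x \in C -> y \in C -> x != y -> (e <= dH x y)%N.
  move=> x y xC yC nxy; rewrite -lez_nat -de ceil_le_int natintR; exact: key.
have en : (e <= n)%N := leq_trans (keye _ _ x0C y0C nx0y0) (dH_le _ _).
split.
- rewrite de.
  have -> : n%:Z - e%:Z + 1 = (n - e + 1)%N%:Z by lia.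
  rewrite -exprnP -natrX ler_nat; apply: singleton_nat => //; by rewrite e1.
- move=> t ht hmax.
  have t0 : 0 <= t.
    apply: hmax; rewrite (_ : (0:int)%:~R = 0) //; apply: divr_gt0 => //.
  have [tn tE] : exists tn : nat, t = tn%:Z by exists `|t|%N; rewrite gez0_abs.
  subst t.
  have H2 : forall x y, x \in C -> y \in C -> x != y -> (2 * tn < dH x y)%N.
    move=> x y xC yC nxy; rewrite -(ltr_nat R) natrM.
    have := key x y xC yC nxy; rewrite /r -mulrA; move: ht; rewrite natintR; lra.
  have Hb := hamming_nat H2; rewrite ball_card in Hb.
  rewrite (eq_bigl (fun i => (i <= tn)%N)); last by move=> i; rewrite lez_nat.
  rewrite -natr_sum.
  have N0 : (0 < \sum_(0 <= i < n.+1 | (i <= tn)%N) 'C(n, i))%N.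
    rewrite -ball_card card_gt0; apply/set0Pn; exists finset.set0; by rewrite inE cards0.
  by rewrite ler_pdivlMr ?ltr0n // -natrM -natrX ler_nat.
- move=> d; rewrite /d de => hlt.
  have P := plotkin_nat keye.
  rewrite floor_ge_int ler_pdivlMr; last by rewrite ltr0z; lia.
  rewrite -intrM ler_int.
  nia.
Qed.
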